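(* For all $n\ge 2$, $PT_n=\ker(\varphi_{PT})$ is isomorphic to $PL_n=\ker(\psi_P)$.
   Context: For $n\ge 2$, the twisted virtual braid group $TVB_n$ is the group with generators $\sigma_1,\dots,\sigma_{n-1}$, $\rho_1,\dots,\rho_{n-1}$, $\gamma_1,\dots,\gamma_n$ and defining relations: $\sigma_i\sigma_{i+1}\sigma_i=\sigma_{i+1}\sigma_i\sigma_{i+1}$ ($1\le i\le n-2$); $\sigma_i\sigma_j=\sigma_j\sigma_i$ ($|i-j|\ge 2$); $\rho_i^2=1$; $\rho_i\rho_j=\rho_j\rho_i$ ($|i-j|\ge2$); $\rho_i\rho_{i+1}\rho_i=\rho_{i+1}\rho_i\rho_{i+1}$ ($1\le i\le n-2$); $\sigma_i\rho_j=\rho_j\sigma_i$ ($|i-j|\ge 2$); $\rho_i\rho_{i+1}\sigma_i=\sigma_{i+1}\rho_i\rho_{i+1}$ ($1\le i\le n-2$); $\gamma_i^2=1$ and $\gamma_i\gamma_j=\gamma_j\gamma_i$ (all $i,j$); $\gamma_j\rho_i=\rho_i\gamma_j$ and $\gamma_j\sigma_i=\sigma_i\gamma_j$ for $j\notin\{i,i+1\}$; $\rho_i\gamma_i=\gamma_{i+1}\rho_i$ ($1\le i\le n-1$); $\rho_i\sigma_i\rho_i=\gamma_{i+1}\gamma_i\sigma_i\gamma_i\gamma_{i+1}$ ($1\le i\le n-1$). $TVP_n$ is the kernel of $\varphi_P:TVB_n\to S_n$, $\sigma_i,\rho_i\mapsto(i,i+1)$, $\gamma_j\mapsto e$. In $TVB_n$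 define $\lambda_{i,i+1}=\rho_i\sigma_i^{-1}$, $\lambda_{i+1,i}=\rho_i\lambda_{i,i+1}\rho_i$ ($1\le i\le n-1$), and for $1\le i<j-1\le n-1$: $\lambda_{ij}=\rho_{j-1}\cdots\rho_{i+1}\lambda_{i,i+1}\rho_{i+1}\cdots\rho_{j-1}$, $\lambda_{ji}=\rho_{j-1}\cdots\rho_{i+1}\lambda_{i+1,i}\rho_{i+1}\cdots\rho_{j-1}$. $A_n=\langle\gamma_1,\dots,\gamma_n\rangle$; $\psi_P:TVP_n\to A_n$ is the homomorphism with $\lambda_{kl}\mapsto e$, $\gamma_j\mapsto\gamma_j$; $PL_n=\ker\psi_P$. $TS_n=\langle\rho_1,\dots,\rho_{n-1},\gamma_1,\dots,\gamma_n\rangle\le TVB_n$, and $\varphi_{PT}:TVB_n\to TS_n$ is the homomorphism $\sigma_i\mapsto\rho_i$, $\rho_i\mapsto\rho_i$, $\gamma_j\mapsto\gamma_j$; $PT_n=\ker\varphi_{PT}$. *)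

(* Defs.v *)
(* Groups given by presentations
   are modelled as words in the generators modulo the congruence generated by
   free cancellation and the defining relations (a setoid presentation). *)
From mathcomp Require Import all_boot.
Set Implicit Arguments. Unset Strict Implicit. Unset Printing Implicit Defensive.

(* Generators of TVB_n, with the paper's 1-based indices:
   Sig i = sigma_i, Rho i = rho_i (1 <= i <= n-1), Gam j = gamma_j (1 <= j <= n). *)
Inductive gen := Sig of nat | Rho of nat | Gam of nat.

(* A letter is a generator together with an exponent sign (true = inverse). *)
Definition letter := (gen * bool)%type.
Definition word := seq letter.

Definition gen_valid (n : nat) (g : gen) : bool :=
  match g with
  | Sig i | Rho i => (1 <= i) && (i <= n - 1)
  | Gam j => (1 <= j) && (j <= n)
  end.

Definition wf (n : nat) (w : word) : bool := all (fun x => gen_valid n x.1) w.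

Definition flip (x : letter) : letter := (x.1, ~~ x.2).
Definition winv (w : word) : word := rev (map flip w).

Definition s (i : nat) : word := [:: (Sig i, false)].
Definition si (i : nat) : word := [:: (Sig i, true)].
Definition r (i : nat) : word := [:: (Rho i, false)].
Definition g (j : nat) : word := [:: (Gam j, false)].

Definition far (i j : nat) : bool := (i + 2 <= j) || (j + 2 <= i).

Inductive defrel (n : nat) : word -> word -> Prop :=
| R_ss3 i : 1 <= i -> i <= n - 2 ->
    defrel n (s i ++ s i.+1 ++ s i) (s i.+1 ++ s i ++ s i.+1)
| R_ss2 i j : 1 <= i <= n - 1 -> 1 <= j <= n - 1 -> far i j ->
    defrel n (s i ++ s j) (s j ++ s i)
| R_rr i : 1 <= i <= n - 1 -> defrel n (r i ++ r i) [::]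
| R_rr2 i j : 1 <= i <= n - 1 -> 1 <= j <= n - 1 -> far i j ->
    defrel n (r i ++ r j) (r j ++ r i)
| R_rr3 i : 1 <= i -> i <= n - 2 ->
    defrel n (r i ++ r i.+1 ++ r i) (r i.+1 ++ r i ++ r i.+1)
| R_sr i j : 1 <= i <= n - 1 -> 1 <= j <= n - 1 -> far i j ->
    defrel n (s i ++ r j) (r j ++ s i)
| R_rrs i : 1 <= i -> i <= n - 2 ->
    defrel n (r i ++ r i.+1 ++ s i) (s i.+1 ++ r i ++ r i.+1)
| R_gg i : 1 <= i <= n -> defrel n (g i ++ g i) [::]
| R_gg2 i j : 1 <= i <= n -> 1 <= j <= n -> defrel n (g i ++ g j) (g j ++ g i)
| R_gr i j : 1 <= i <= n - 1 -> 1 <= j <= n -> j != i -> j != i.+1 ->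
    defrel n (g j ++ r i) (r i ++ g j)
| R_gs i j : 1 <= i <= n - 1 -> 1 <= j <= n -> j != i -> j != i.+1 ->
    defrel n (g j ++ s i) (s i ++ g j)
| R_rg i : 1 <= i <= n - 1 -> defrel n (r i ++ g i) (g i.+1 ++ r i)
| R_rsr i : 1 <= i <= n - 1 ->
    defrel n (r i ++ s i ++ r i) (g i.+1 ++ g i ++ s i ++ g i ++ g i.+1).

Inductive eqv (n : nat) : word -> word -> Prop :=
| eqv_refl w : eqv n w w
| eqv_sym u v : eqv n u v -> eqv n v u
| eqv_trans u v w : eqv n u v -> eqv n v w -> eqv n u w
| eqv_cat u u' v v' : eqv n u u' -> eqv n v v' -> eqv n (u ++ v) (u' ++ v')
| eqv_free x : eqv n [:: x; flip x] [::]
| eqv_rel u v : defrel n u v -> eqv n u v.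

(* phi_P : TVB_n -> S_n, sigma_i, rho_i |-> (i, i+1), gamma_j |-> e,
   realised as the induced permutation of nat (only 1..n is moved). *)
Definition transp (i k : nat) : nat :=
  if k == i then i.+1 else if k == i.+1 then i else k.
Definition perm_letter (x : letter) : nat -> nat :=
  match x.1 with Sig i | Rho i => transp i | Gam _ => id end.
Definition phiP (w : word) : nat -> nat :=
  foldr (fun x f => perm_letter x \o f) id w.

Definition TVP (n : nat) (w : word) : Prop := wf n w /\ forall k, phiP w k = k.

Definition phiPT_letter (x : letter) : letter :=
  match x.1 with Sig i => (Rho i, x.2) | _ => x end.
Definition phiPT (w : word) : word := map phiPT_letter w.

Definition PT (n : nat) (w : word) : Prop := wf n w /\ eqv n (phiPT w) [::].

Definition A_sub (n : nat) (w : word) : Prop :=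
  exists u : word, all (fun x => if x.1 is Gam j then (1 <= j) && (j <= n) else false) u
                   /\ eqv n w u.

Definition lam_up (i : nat) : word := r i ++ si i.
Definition lam_dn (i : nat) : word := r i ++ lam_up i ++ r i.
Definition rhos_up (i j : nat) : word := flatten (map r (iota i.+1 (j - i.+1))).
Definition rhos_down (i j : nat) : word := flatten (map r (rev (iota i.+1 (j - i.+1)))).
(* for 1 <= i < j <= n (j = i+1 gives the basic ones, as the rho-strings are empty) *)
Definition lam (k l : nat) : word :=
  if k < l then rhos_down k l ++ lam_up k ++ rhos_up k l
  else rhos_down l k ++ lam_dn l ++ rhos_up l k.

Definition is_psiP (n : nat) (psi : word -> word) : Prop :=
  [/\ (forall x y, TVP n x -> TVP n y -> eqv n x y -> eqv n (psi x) (psi y)),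
      (forall x y, TVP n x -> TVP n y -> eqv n (psi (x ++ y)) (psi x ++ psi y)),
      (forall x, TVP n x -> A_sub n (psi x)),
      (forall k l, 1 <= k <= n -> 1 <= l <= n -> k != l -> eqv n (psi (lam k l)) [::])
    & (forall j, 1 <= j <= n -> eqv n (psi (g j)) (g j))].

Definition PL (n : nat) (psi : word -> word) (w : word) : Prop :=
  TVP n w /\ eqv n (psi w) [::].

Definition subgroup_iso (n : nat) (H K : word -> Prop) : Prop :=
  exists f : word -> word,
    [/\ (forall x y, H x -> H y -> eqv n x y -> eqv n (f x) (f y)),
        (forall x, H x -> K (f x)),
        (forall x y, H x -> H y -> eqv n (f (x ++ y)) (f x ++ f y)),
        (forall x y, H x -> H y -> eqv n (f x) (f y) -> eqv n x y)
      & (forall z, K z -> exists2 x, H x & eqv n (f x) z)].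

(* Main.v *)
Require Import Defs.
From mathcomp Require Import all_boot zify.
From Stdlib Require Import Setoid Morphisms.
Set Implicit Arguments. Unset Strict Implicit. Unset Printing Implicit Defensive.

#[export] Instance eqv_Equiv n : Equivalence (eqv n).
Proof. split; [exact: eqv_refl| exact: eqv_sym| exact: eqv_trans]. Qed.
#[export] Instance cat_Proper n : Proper (eqv n ==> eqv n ==> eqv n) (@cat letter).
Proof. move=> ? ? H ? ? H'; exact: eqv_cat. Qed.

#[export] Hint Resolve eqv_refl eqv_free : core.
Lemma flipK : involutive flip. Proof. by case=> a b; rewrite /flip /= negbK. Qed.
Lemma winvK : involutive winv.
Proof. move=> w; rewrite /winv map_rev revK -map_comp.
by elim: w => //= x w ->; rewrite flipK. Qed.
Lemma winv_cat u v : winv (u ++ v) = winv v ++ winv u.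
Proof. by rewrite /winv map_cat rev_cat. Qed.
Lemma winv_cons x w : winv (x :: w) = winv w ++ [:: flip x].
Proof. by rewrite /winv /= rev_cons cats1. Qed.

Lemma cancel_r n w : eqv n (w ++ winv w) [::].
Proof.
elim: w => [|x w IH] /=; first by rewrite /winv.
have -> : x :: w ++ winv (x :: w) = [:: x] ++ (w ++ winv w) ++ [:: flip x].
  by rewrite winv_cons /= catA.
rewrite IH /=. exact: eqv_free.
Qed.
Lemma cancel_l n w : eqv n (winv w ++ w) [::].
Proof. by rewrite -{2}(winvK w); apply: cancel_r. Qed.

Lemma test n u v w : eqv n u v -> eqv n (w ++ u) (w ++ v).
Proof. move=> H. rewrite H. reflexivity. Qed.

Lemma phiP_cat u v k : phiP (u ++ v) k = phiP u (phiP v k).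
Proof. by elim: u => //= x u IH; rewrite IH. Qed.
Lemma phiP_cons x u k : phiP (x :: u) k = perm_letter x (phiP u k).
Proof. by []. Qed.

Ltac tsolve := rewrite /transp; repeat match goal with |- context [?a == ?b] =>
   tryif (match a with context[if _ then _ else _] => idtac end) then fail else
   (case: (a =P b) => ?) end; lia.

Lemma transpK i k : transp i (transp i k) = k. Proof. tsolve. Qed.

Lemma phiP_eqv n u v : eqv n u v -> forall k, phiP u k = phiP v k.
Proof.
elim=> {u v}.
- by [].
- by move=> u v H0 H k; rewrite H.
- by move=> u v w H0 H1 H3 H2 k; rewrite H1 H2.
- by move=> u u' v v' H0 H1 H3 H2 k; rewrite !phiP_cat H1 H2.
- by case=> [[i|i|i] b] k //=; rewrite /perm_letter /= transpK.
- move=> u v [] /= {u v}; rewrite /perm_letter /far /=; intros; try tsolve.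
Qed.

Lemma eqv_rel' n u v : defrel n u v -> eqv n u v. Proof. exact: eqv_rel. Qed.

Lemma rr n i : 1 <= i <= n - 1 -> eqv n (r i ++ r i) [::].
Proof. by move=> H; apply/eqv_rel/R_rr. Qed.

Lemma rbar n i : 1 <= i <= n - 1 -> eqv n [:: (Rho i, true)] (r i).
Proof.
move=> H. transitivity ([:: (Rho i, true)] ++ (r i ++ r i)).
  by rewrite rr // cats0.
rewrite catA. have -> : [:: (Rho i, true)] ++ r i = [:: (Rho i, true); flip (Rho i, true)] by [].
by rewrite eqv_free.
Qed.

Lemma gg n i : 1 <= i <= n -> eqv n (g i ++ g i) [::].
Proof. by move=> H; apply/eqv_rel/R_gg. Qed.

Lemma gbar n i : 1 <= i <= n -> eqv n [:: (Gam i, true)] (g i).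
Proof.
move=> H. transitivity ([:: (Gam i, true)] ++ (g i ++ g i)).
  by rewrite gg // cats0.
rewrite catA. have -> : [:: (Gam i, true)] ++ g i = [:: (Gam i, true); flip (Gam i, true)] by [].
by rewrite eqv_free.
Qed.

Lemma rcomm n i j : 1 <= i <= n - 1 -> 1 <= j <= n - 1 -> far i j ->
  eqv n (r i ++ r j) (r j ++ r i).
Proof. by move=> *; apply/eqv_rel/R_rr2. Qed.

Lemma rbraid n i : 1 <= i -> i.+1 <= n - 1 ->
  eqv n (r i ++ r i.+1 ++ r i) (r i.+1 ++ r i ++ r i.+1).
Proof. by move=> *; apply/eqv_rel/R_rr3 => //; lia. Qed.

Lemma rg n i j : 1 <= i <= n - 1 -> 1 <= j <= n ->
  eqv n (r i ++ g j) (g (transp i j) ++ r i).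
Proof.
move=> Hi Hj. rewrite /transp.
case: (j =P i) => [->|Hji]; first by apply/eqv_rel/R_rg.
case: (j =P i.+1) => [->|Hji1].
  have H1 : eqv n (g i.+1 ++ r i) (r i ++ g i) by apply/eqv_sym/eqv_rel/R_rg.
  transitivity (r i ++ g i.+1 ++ (r i ++ r i)); first by rewrite rr // cats0.
  by rewrite (catA (g _)) H1 !catA rr.
apply/eqv_sym/eqv_rel/R_gr => //; apply/eqP => //.
Qed.

Definition rokb n a b (x : letter) : bool :=
  if x.1 is Rho j then (a <= j) && (j <= b) && (j <= n - 1) && (1 <= j) else false.
Definition rhow n a w := all (rokb n a (n - 1)) w.

Definition rs (s : seq nat) : word := flatten (map r s).
Lemma rs_cat s1 s2 : rs (s1 ++ s2) = rs s1 ++ rs s2.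
Proof. by rewrite /rs map_cat flatten_cat. Qed.
Lemma rs_cons t s : rs (t :: s) = r t ++ rs s. Proof. by []. Qed.

Lemma letter_rho n x j : x.1 = Rho j -> 1 <= j <= n - 1 -> eqv n [:: x] (r j).
Proof. case: x => [[i|i|i] [|]] //= [<-] H; [exact: rbar | by []]. Qed.

Lemma rokb_r n a b x : rokb n a b x -> exists j, [/\ a <= j, j <= b, 1 <= j <= n - 1 & eqv n [:: x] (r j)].
Proof.
rewrite /rokb; case: x => [[i|i|i] e] //= H. exists i; split; try lia.
apply: letter_rho => //; lia.
Qed.

Lemma rcomm_word n j w : 1 <= j <= n - 1 ->
  all (fun x => if x.1 is Rho t then (1 <= t) && (t <= n - 1) && far j t else false) w ->
  eqv n (r j ++ w) (w ++ r j).
Proof.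
move=> Hj. elim: w => [|x w IH]; first by rewrite cats0.
case: x => [[t|t|t] e] //= /andP[/andP[Ht Hf] Hw].
have Hx : eqv n [:: (Rho t, e)] (r t) by apply: letter_rho.
have -> : [:: (Rho j,false), (Rho t,e) & w] = r j ++ [:: (Rho t,e)] ++ w by [].
have -> : (Rho t,e) :: w ++ r j = [:: (Rho t,e)] ++ (w ++ r j) by [].
rewrite Hx !catA rcomm // -!catA IH //.
Qed.

Definition d a k := rs (iota a (k - a)).

Lemma d_split a m k : a <= m <= k -> d a k = d a m ++ d m k.
Proof.
move=> H; rewrite /d -rs_cat.
have E : iota m (k - m) = iota (a + (m - a)) (k - m) by congr iota; lia.
rewrite E -iotaD; congr (rs (iota _ _)); lia.
Qed.

Lemma dS a k : a <= k -> d a k.+1 = d a k ++ r k.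
Proof.
move=> H; rewrite (@d_split a k k.+1) //; last lia.
by rewrite /d subSn // subnn.
Qed.

Lemma d0 a : d a a = [::]. Proof. by rewrite /d subnn. Qed.

Lemma all_rs (P : pred letter) s : all P (rs s) = all (fun t => P (Rho t, false)) s.
Proof. by elim: s => //= t s ->. Qed.

Lemma d_far n a k j : 1 <= a -> k < j -> 1 <= j <= n - 1 ->
  eqv n (d a k ++ r j) (r j ++ d a k).
Proof.
move=> Ha Hk Hj. apply: eqv_sym; apply: rcomm_word => //.
rewrite all_rs; apply/allP => t; rewrite mem_iota /far => Ht /=; lia.
Qed.

Lemma d_far2 n a k j : j.+2 <= a -> k <= n -> 1 <= j <= n - 1 ->
  eqv n (d a k ++ r j) (r j ++ d a k).
Proof.
move=> Ha Hk Hj. apply: eqv_sym; apply: rcomm_word => //.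
rewrite all_rs; apply/allP => t; rewrite mem_iota /far => Ht /=; lia.
Qed.

Lemma rbraidT n i w : 1 <= i -> i.+1 <= n - 1 ->
  eqv n (r i ++ r i.+1 ++ r i ++ w) (r i.+1 ++ r i ++ r i.+1 ++ w).
Proof. move=> H1 H2; have := eqv_cat (rbraid H1 H2) (eqv_refl n w); by rewrite -!catA. Qed.

Lemma dSS j k : j.+1 < k -> d j k = r j ++ r j.+1 ++ d j.+2 k.
Proof.
move=> H; rewrite /d.
have -> : k - j = (k - j.+2).+2 by lia.
by [].
Qed.

Lemma d_mulr n a k j : 1 <= a -> a <= k <= n -> a <= j <= n - 1 ->
  exists w k', [/\ rhow n a.+1 w, a <= k' <= n & eqv n (d a k ++ r j) (w ++ d a k')].
Proof.
move=> Ha Hk Hj.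
case: (j =P k) => [Ejk|Hjk].
  exists [::], k.+1; split => //; first lia. by rewrite dS //; [subst|lia].
case: (j.+1 =P k) => [Ejk|Hjk1].
  exists [::], j; split => //; first lia.
  rewrite -Ejk dS; last lia. rewrite -catA rr //; [by rewrite cats0|lia].
case: (ltnP k j) => Hkj.
  exists (r j), k; split => //; first by rewrite /rhow /= /rokb /=; lia.
  apply: d_far => //; lia.
exists (r j.+1), k; split => //; first by rewrite /rhow /= /rokb /=; lia.
have Hjk2 : j.+1 < k by lia.
rewrite (@d_split a j k); last lia.
rewrite (@dSS j k Hjk2) -?catA.
rewrite (d_far2 (n:=n) (a:=j.+2) (k:=k) (j:=j)); try lia.
rewrite rbraidT; try lia.
rewrite (catA (d a j)) (d_far (n:=n) (a:=a) (k:=j) (j:=j.+1)); try lia.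
by rewrite -?catA.
Qed.

Lemma rhow_cat n a u v : rhow n a (u ++ v) = rhow n a u && rhow n a v.
Proof. by rewrite /rhow all_cat. Qed.

Lemma peel n a w : 1 <= a <= n - 1 -> rhow n a w ->
  exists w' k, [/\ rhow n a.+1 w', a <= k <= n & eqv n w (w' ++ d a k)].
Proof.
move=> Ha. elim/last_ind: w => [|w x IH].
  move=> _; exists [::], a; split => //; first lia. by rewrite d0.
rewrite -cats1 rhow_cat => /andP[Hw Hx].
have [w' [k [Hw' Hk E]]] := IH Hw.
move: Hx; rewrite /rhow /= andbT => /rokb_r [j [H1 H2 H3 Ex]].
have [w'' [k' [Hw'' Hk' E']]] := @d_mulr n a k j ltac:(lia) Hk ltac:(lia).
exists (w' ++ w''), k'; split.
- by rewrite /rhow all_cat; apply/andP.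
- by [].
- by rewrite E Ex -catA E' catA.
Qed.

Lemma phiP_d a k : a <= k -> phiP (d a k) k = a.
Proof.
elim: k => [|k IH] H; first by rewrite (_ : a = 0) ?d0 //; lia.
case: (a =P k.+1) => [->|Hak]; first by rewrite d0.
rewrite dS; last lia.
rewrite phiP_cat /= /perm_letter /= /transp.
have -> : (k.+1 == k) = false by apply/eqP; lia.
rewrite eqxx IH //; lia.
Qed.

Lemma phiP_fix n a w : rhow n a.+1 w -> phiP w a = a.
Proof.
elim: w => //= x w IH /andP[Hx Hw]; rewrite IH //.
move: Hx; rewrite /rokb /perm_letter; case: x.1 => // j Hj.
rewrite /transp; case: eqP => ?; first lia. case: eqP => ?; first lia. by [].
Qed.

Lemma phiP_winv w x : phiP (winv w) (phiP w x) = x.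
Proof. by rewrite -phiP_cat (phiP_eqv (cancel_l 0 w)). Qed.
Lemma phiP_winv' w x : phiP w (phiP (winv w) x) = x.
Proof. by rewrite -phiP_cat (phiP_eqv (cancel_r 0 w)). Qed.

Lemma phiP_inj w x y : phiP w x = phiP w y -> x = y.
Proof. move=> E; by rewrite -(phiP_winv w x) E phiP_winv. Qed.

Lemma fix_a n a w : 1 <= a <= n - 1 -> rhow n a w -> phiP w a = a ->
  exists w', rhow n a.+1 w' /\ eqv n w w'.
Proof.
move=> Ha Hw Hfix.
have [w' [k [Hw' Hk E]]] := peel Ha Hw.
have Hk' : phiP w k = a.
  rewrite (phiP_eqv E) phiP_cat phiP_d; last lia. exact: phiP_fix Hw'.
have Eka : k = a by apply: (@phiP_inj w); rewrite Hk' Hfix.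
by exists w'; split => //; rewrite E Eka d0 cats0.
Qed.

Lemma coxeter n a w : 1 <= a -> rhow n a w -> (forall k, phiP w k = k) -> eqv n w [::].
Proof.
move=> Ha; move Em : (n - a) => m; elim: m a w Ha Em => [|m IH] a w Ha Em Hw Hid.
  case: w Hw {Hid} => // x w; rewrite /rhow /= /rokb; case: x.1 => // j; lia.
have [w' [Hw' E]] := @fix_a n a w ltac:(lia) Hw (Hid a).
rewrite E; apply: (IH a.+1) => //; first lia.
by move=> k; rewrite -(phiP_eqv E).
Qed.

Arguments r : simpl never.
Arguments si : simpl never.
Arguments s : simpl never.
Arguments g : simpl never.

Lemma winv_eqv n u v : eqv n u v -> eqv n (winv u) (winv v).
Proof.
move=> E. transitivity (winv u ++ (v ++ winv v)); first by rewrite cancel_r cats0.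
apply: eqv_trans (_ : eqv n _ (winv u ++ (u ++ winv v))) _.
  by apply: eqv_cat => //; apply: eqv_cat => //; apply: eqv_sym.
by rewrite catA cancel_l.
Qed.

Lemma winv_r n j : 1 <= j <= n - 1 -> eqv n (winv (r j)) (r j).
Proof. exact: rbar. Qed.

Lemma rs_rev_winv n s : all (fun t => (1 <= t) && (t <= n - 1)) s ->
  eqv n (winv (rs s)) (rs (rev s)).
Proof.
elim: s => [|t s IH] //= /andP[Ht Hs].
rewrite rs_cons winv_cat IH // winv_r // rev_cons -cats1 rs_cat.
have -> : rs [:: t] = r t.
  by [].
by [].
Qed.


Lemma rrT n i w : 1 <= i <= n - 1 -> eqv n (r i ++ r i ++ w) w.
Proof. by move=> H; rewrite catA rr. Qed.

Lemma lam_up_step n i : 1 <= i -> i.+1 <= n - 1 ->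
  eqv n (lam_up i.+1) ((r i ++ r i.+1) ++ lam_up i ++ winv (r i ++ r i.+1)).
Proof.
move=> H1 H2.
have Hrrs : eqv n (r i ++ r i.+1 ++ s i) (s i.+1 ++ r i ++ r i.+1) by apply/eqv_rel/R_rrs => //; lia.
have Hw := winv_eqv Hrrs.
rewrite !winv_cat !winv_r in Hw; try lia.
rewrite -/(si i) -/(si i.+1) in Hw.
rewrite /lam_up winv_cat !winv_r; try lia.
have ws : forall j, winv (s j) = si j by [].
rewrite !ws -!catA in Hw. rewrite -!catA Hw rbraidT; try lia.
rewrite (rrT (i := i.+1)); last lia.
rewrite rrT //; lia.
Qed.

Fixpoint Pi (m : nat) : word :=
  match m with
  | 0 => [::]
  | m'.+1 => if m' is 0 then [::] else r m' ++ r m ++ Pi m'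
  end.

Lemma PiS m : 1 <= m -> Pi m.+1 = r m ++ r m.+1 ++ Pi m.
Proof. by case: m. Qed.

Lemma lam_up_Pi n m : 1 <= m <= n - 1 ->
  eqv n (lam_up m) (Pi m ++ lam_up 1 ++ winv (Pi m)).
Proof.
elim: m => [|m IH] H; first lia.
case: (m =P 0) => [->|Hm].
  have -> : Pi 1 = [::] by []. have -> : winv [::] = [::] by []. by rewrite cats0.
rewrite lam_up_step; try lia. rewrite IH; last lia.
rewrite PiS; last lia.
by rewrite !winv_cat -!catA.
Qed.

Lemma phiP_Pi m : 1 <= m -> phiP (Pi m) 1 = m /\ phiP (Pi m) 2 = m.+1.
Proof.
elim: m => [|m IH] H; first lia.
case: (m =P 0) => [->|Hm]; first by [].
rewrite PiS; last lia.
have [E1 E2] := IH ltac:(lia).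
rewrite !phiP_cat E1 E2 /= /perm_letter /=; split; tsolve.
Qed.

Lemma rhow_Pi n m : m <= n - 1 -> rhow n 1 (Pi m).
Proof.
elim: m => [|m IH] H //.
case: (m =P 0) => [->|Hm]; first by [].
rewrite PiS; last lia.
rewrite !rhow_cat IH; last lia.
by rewrite /rhow /= /rokb /=; apply/andP; split; lia.
Qed.

Lemma phiP_rdm k m : phiP (rs (rev (iota k.+1 m))) k = k /\ phiP (rs (rev (iota k.+1 m))) k.+1 = k.+1 + m.
Proof.
elim: m => [|m [IH1 IH2]]; first by rewrite addn0.
rewrite (_ : m.+1 = m + 1); last by rewrite addn1.
rewrite iotaD rev_cat rs_cat !phiP_cat IH1 IH2 /= /perm_letter /=.
split; tsolve.
Qed.

Lemma phiP_rd k l : k < l -> phiP (rhos_down k l) k = k /\ phiP (rhos_down k l) k.+1 = l.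
Proof.
move=> H; have [E1 E2] := phiP_rdm k (l - k.+1).
rewrite /rhos_down -/(rs _) E1 E2; split => //; lia.
Qed.

Lemma rhow_rs n s : all (fun t => (1 <= t) && (t <= n - 1)) s -> rhow n 1 (rs s).
Proof.
move=> /allP H; rewrite /rhow all_rs; apply/allP => t Ht /=; rewrite /rokb /=.
have := H t Ht; lia.
Qed.

Lemma iota_ok n k l : k < l <= n -> all (fun t => (1 <= t) && (t <= n - 1)) (iota k.+1 (l - k.+1)).
Proof. move=> H; apply/allP => t; rewrite mem_iota => Ht; lia. Qed.

Lemma rev_ok n s : all (fun t => (1 <= t) && (t <= n - 1)) s -> all (fun t => (1 <= t) && (t <= n - 1)) (rev s).
Proof. by rewrite all_rev. Qed.

Lemma rhos_up_winv n k l : k < l <= n ->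
  eqv n (rhos_up k l) (winv (rhos_down k l)).
Proof.
move=> H; rewrite /rhos_down -/(rs _) rs_rev_winv ?revK //.
exact/rev_ok/iota_ok.
Qed.

Lemma lamQ n u v : 1 <= u <= n -> 1 <= v <= n -> u != v ->
  exists Q, [/\ rhow n 1 Q, phiP Q 1 = u, phiP Q 2 = v &
                eqv n (lam u v) (Q ++ lam_up 1 ++ winv Q)].
Proof.
move=> Hu Hv Huv; rewrite /lam.
case: (ltnP u v) => Hlt.
  exists (rhos_down u v ++ Pi u); split.
  - rewrite rhow_cat rhow_Pi; last lia.
    by rewrite /rhos_down -/(rs _) rhow_rs // rev_ok // iota_ok //; lia.
  - have [E1 E2] := phiP_Pi (m:=u) ltac:(lia).
    have [F1 F2] := phiP_rd Hlt.
    by rewrite phiP_cat E1 F1.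
  - have [E1 E2] := phiP_Pi (m:=u) ltac:(lia).
    have [F1 F2] := phiP_rd Hlt.
    by rewrite phiP_cat E2 F2.
  - rewrite rhos_up_winv; last lia.
    rewrite lam_up_Pi; last lia.
    by rewrite winv_cat -!catA.
have Hvu : v < u by rewrite ltn_neqAle eq_sym Huv Hlt.
exists (rhos_down v u ++ r v ++ Pi v); split.
- rewrite !rhow_cat rhow_Pi; last lia.
  rewrite /rhos_down -/(rs _) rhow_rs ?rev_ok ?iota_ok //; try lia.
  by rewrite /rhow /= /rokb /= andbT; lia.
- have [E1 E2] := phiP_Pi (m:=v) ltac:(lia).
  have [F1 F2] := phiP_rd Hvu.
  rewrite !phiP_cat E1 /= /perm_letter /= /transp eqxx; by rewrite F2.
- have [E1 E2] := phiP_Pi (m:=v) ltac:(lia).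
  have [F1 F2] := phiP_rd Hvu.
  rewrite !phiP_cat E2 /= /perm_letter /= /transp.
  have -> : (v.+1 == v) = false by apply/eqP; lia.
  by rewrite eqxx F1.
- rewrite rhos_up_winv; last lia.
  rewrite /lam_dn lam_up_Pi; last lia.
  rewrite !winv_cat winv_r; last lia.
  by rewrite -!catA.
Qed.

Arguments r : simpl never.
Arguments si : simpl never.
Arguments s : simpl never.
Arguments g : simpl never.
Arguments lam_up : simpl never.

Lemma rt_lam1 n t : 3 <= t <= n - 1 -> eqv n (r t ++ lam_up 1) (lam_up 1 ++ r t).
Proof.
move=> Ht.
have Hs : eqv n (s 1 ++ r t) (r t ++ s 1) by apply/eqv_rel/R_sr => //; try lia; rewrite /far; lia.
have Hsi : eqv n (si 1 ++ r t) (r t ++ si 1).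
  transitivity (si 1 ++ r t ++ (s 1 ++ si 1)).
    have -> : s 1 ++ si 1 = [:: (Sig 1, false); flip (Sig 1, false)] by [].
    by rewrite eqv_free cats0.
  rewrite (catA (r t) (s 1) (si 1)) -Hs !catA.
  have -> : si 1 ++ s 1 = [:: (Sig 1, true); flip (Sig 1, true)] by [].
  by rewrite eqv_free.
rewrite /lam_up catA rcomm; try lia; last by rewrite /far; lia.
by rewrite -!catA Hsi.
Qed.

Lemma commute_L n D : rhow n 3 D -> eqv n (D ++ lam_up 1) (lam_up 1 ++ D).
Proof.
elim: D => [|x D IH]; first by rewrite cats0.
move=> /andP[Hx HD].
have [j [H1 H2 H3 Ex]] := rokb_r Hx.
rewrite -cat1s -catA IH // Ex catA rt_lam1; last lia.
by rewrite -catA.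
Qed.

Lemma rhow_empty n a w : n - 1 < a -> rhow n a w -> w = [::].
Proof. case: w => // x w H; rewrite /rhow /= /rokb; case: x.1 => // j; lia. Qed.

Lemma fix_a' n a w : 1 <= a -> rhow n a w -> phiP w a = a ->
  exists w', rhow n a.+1 w' /\ eqv n w w'.
Proof.
move=> Ha Hw Hf; case: (leqP a (n - 1)) => Han.
  apply: fix_a => //; lia.
by exists [::]; rewrite (rhow_empty Han Hw).
Qed.

Lemma rhow_winv n a w : rhow n a (winv w) = rhow n a w.
Proof. by rewrite /rhow /winv all_rev all_map. Qed.

Lemma phiP_rhow_range n a w x : 1 <= a -> rhow n a w -> 1 <= x <= n -> 1 <= phiP w x <= n.
Proof.
move=> Ha; elim: w => //= y w IH /andP[Hy Hw] Hx.
have := IH Hw Hx. move: Hy; rewrite /rokb /perm_letter; case: y.1 => // j Hj.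
rewrite /transp; case: eqP => ?; first lia. case: eqP => ?; lia.
Qed.

Lemma conjL n q : 2 <= n -> rhow n 1 q ->
  [/\ 1 <= phiP q 1 <= n, 1 <= phiP q 2 <= n, phiP q 1 != phiP q 2 &
      eqv n (q ++ lam_up 1 ++ winv q) (lam (phiP q 1) (phiP q 2))].
Proof.
move=> Hn Hq.
have Hu := phiP_rhow_range (a:=1) (x:=1) (isT : 1 <= 1) Hq ltac:(lia).
have Hv := phiP_rhow_range (a:=1) (x:=2) (isT : 1 <= 1) Hq ltac:(lia).
have Huv : phiP q 1 != phiP q 2 by apply/eqP => /phiP_inj.
split => //.
have [Q [HQ Q1 Q2 EQ]] := lamQ Hu Hv Huv.
set D := winv Q ++ q.
have HD : rhow n 1 D by rewrite /D rhow_cat rhow_winv HQ Hq.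
have D1 : phiP D 1 = 1 by rewrite phiP_cat -Q1 phiP_winv.
have [D' [HD' ED']] := fix_a' (isT : 1 <= 1) HD D1.
have D2 : phiP D' 2 = 2 by rewrite -(phiP_eqv ED') phiP_cat -Q2 phiP_winv.
have [D'' [HD'' ED'']] := fix_a' (isT : 1 <= 2) HD' D2.
have Eq : eqv n q (Q ++ D'').
  by rewrite -ED'' -ED' /D catA cancel_r.
rewrite EQ (winv_eqv Eq) Eq winv_cat -!catA.
rewrite (catA D'' (lam_up 1)) commute_L // -catA (catA D'') cancel_r.
by [].
Qed.

Arguments r : simpl never.
Arguments si : simpl never.
Arguments s : simpl never.
Arguments g : simpl never.
Arguments lam_up : simpl never.
Typeclasses Transparent letter word.

Definition gokb n (x : letter) : bool := if x.1 is Gam j then (1 <= j) && (j <= n) else false.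
Definition gw n w := all (gokb n) w.
Definition tokb n (x : letter) : bool :=
  match x.1 with Sig _ => false | Rho j => (1 <= j) && (j <= n - 1) | Gam j => (1 <= j) && (j <= n) end.
Definition tsw n w := all (tokb n) w.

Lemma letter_gam n x j : x.1 = Gam j -> 1 <= j <= n -> eqv n [:: x] (g j).
Proof. case: x => [[i|i|i] [|]] //= [<-] H; [exact: gbar | by []]. Qed.

Lemma rho_gw n i a : 1 <= i <= n - 1 -> gw n a ->
  exists a', gw n a' /\ eqv n (r i ++ a) (a' ++ r i).
Proof.
move=> Hi; elim: a => [|x a IH]; first by exists [::]; rewrite cats0.
rewrite /gw /= => /andP[Hx Ha].
have [a' [Ha' E]] := IH Ha.
move: Hx; rewrite /gokb; case Ex: x.1 => [j|j|j] // Hj.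
have Exg := letter_gam Ex Hj.
exists (g (transp i j) ++ a'); split.
  rewrite /gw all_cat -/(gw n a') Ha' andbT /g /= /gokb /= andbT; move: Hj; rewrite /transp.
  case: eqP => ?; first lia. case: eqP => ?; lia.
change (eqv n (r i ++ [:: x] ++ a) ((g (transp i j) ++ a') ++ r i)).
rewrite Exg catA rg // -catA E catA. by [].
Qed.

Lemma ts_split n c : tsw n c -> exists a p, [/\ gw n a, rhow n 1 p & eqv n c (a ++ p)].
Proof.
elim: c => [|x c IH]; first by move=> _; exists [::], [::].
rewrite /tsw /= => /andP[Hx Hc].
have [a [p [Ha Hp E]]] := IH Hc.
move: Hx; rewrite /tokb; case Ex: x.1 => [j|j|j] // Hj.
- have Exr := @letter_rho n x j Ex ltac:(lia).
  have [a' [Ha' E']] := @rho_gw n j a ltac:(lia) Ha.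
  exists a', (r j ++ p); split => //.
    rewrite rhow_cat Hp andbT /rhow /= /rokb /= andbT; lia.
  by rewrite -(cat1s x c) Exr E catA E' -catA.
- exists (x :: a), p; split => //; first by rewrite /gw /= -/(gw n a) Ha /gokb Ex Hj.
  by rewrite -(cat1s x c) E.
Qed.

Lemma phiP_gw n a k : gw n a -> phiP a k = k.
Proof.
elim: a => //= x a IH /andP[Hx Ha]; rewrite IH //.
by move: Hx; rewrite /gokb /perm_letter; case: x.1.
Qed.

Lemma wf_cat n u v : wf n (u ++ v) = wf n u && wf n v.
Proof. by rewrite /wf all_cat. Qed.
Lemma wf_winv n u : wf n (winv u) = wf n u.
Proof. by rewrite /wf /winv all_rev all_map. Qed.
Lemma tsw_wf n c : tsw n c -> wf n c.
Proof. rewrite /tsw /wf; elim: c => //= x c IH /andP[Hx Hc]; rewrite IH // andbT; move: Hx; rewrite /tokb /gen_valid; case: x.1 => // j; lia. Qed.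
Lemma gw_wf n c : gw n c -> wf n c.
Proof. rewrite /gw /wf; elim: c => //= x c IH /andP[Hx Hc]; rewrite IH // andbT; move: Hx; rewrite /gokb /gen_valid; case: x.1 => // j. Qed.
Lemma rhow_wf n a c : 1 <= a -> rhow n a c -> wf n c.
Proof.
rewrite /rhow /wf => Ha; elim: c => //= x c IH /andP[Hx Hc]; rewrite IH // andbT; move: Hx; rewrite /rokb /gen_valid; case: x.1 => // j; lia.
Qed.
Lemma wf_lam_up n i : 1 <= i <= n - 1 -> wf n (lam_up i).
Proof. by move=> H; rewrite /lam_up /r /si /wf /= andbT H. Qed.
Lemma wf_rs n s : all (fun t => (1 <= t) && (t <= n - 1)) s -> wf n (rs s).
Proof. by move=> H; apply: (rhow_wf (a := 1)) => //; apply: rhow_rs. Qed.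

Lemma wf_lam n u v : 1 <= u <= n -> 1 <= v <= n -> u != v -> wf n (lam u v).
Proof.
move=> Hu Hv Huv; rewrite /lam.
case: (ltnP u v) => H.
  rewrite /rhos_down /rhos_up -!/(rs _) !wf_cat.
  rewrite !wf_rs ?rev_ok ?iota_ok //=; try lia.
  try (rewrite /wf /r /si /=; lia).
have Hvu : v < u by rewrite ltn_neqAle eq_sym Huv H.
rewrite /rhos_down /rhos_up /lam_dn -!/(rs _) !wf_cat.
rewrite !wf_rs ?rev_ok ?iota_ok //=; try lia.
Qed.

Lemma phiP_conj a L k : (forall k, phiP L k = k) -> phiP (a ++ L ++ winv a) k = k.
Proof. by move=> H; rewrite !phiP_cat H phiP_winv'. Qed.

Lemma phiP_lam_up1 k : phiP (lam_up 1) k = k.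
Proof. by rewrite /lam_up /r /si /= /perm_letter /= transpK. Qed.

Lemma phiP_lam n u v k : 2 <= n -> 1 <= u <= n -> 1 <= v <= n -> u != v -> phiP (lam u v) k = k.
Proof.
move=> Hn Hu Hv Huv.
have [Q [_ _ _ EQ]] := lamQ Hu Hv Huv.
by rewrite (phiP_eqv EQ) phiP_conj // => k'; apply: phiP_lam_up1.
Qed.

Arguments r : simpl never.
Arguments si : simpl never.
Arguments s : simpl never.
Arguments g : simpl never.
Arguments lam_up : simpl never.
Typeclasses Transparent letter word.

Lemma TVP_cat n x y : TVP n x -> TVP n y -> TVP n (x ++ y).
Proof. by move=> [Wx Px] [Wy Py]; split; [rewrite wf_cat Wx Wy | move=> k; rewrite phiP_cat Py Px]. Qed.
Lemma TVP_winv n x : TVP n x -> TVP n (winv x).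
Proof.
move=> [Wx Px]; split; first by rewrite wf_winv.
by move=> k; rewrite -{1}(Px k) phiP_winv.
Qed.
Lemma TVP_nil n : TVP n [::]. Proof. by []. Qed.
Lemma TVP_eqv n x y : wf n y -> TVP n x -> eqv n x y -> TVP n y.
Proof. by move=> Wy [Wx Px] E; split => // k; rewrite -(phiP_eqv E). Qed.
Lemma TVP_gw n a : gw n a -> TVP n a.
Proof. by move=> H; split; [exact: gw_wf | move=> k; exact: phiP_gw H]. Qed.

Lemma cancel_mul n u : eqv n u (u ++ u) -> eqv n u [::].
Proof.
move=> E. transitivity (u ++ (u ++ winv u)); first by rewrite cancel_r cats0.
by rewrite catA -E cancel_r.
Qed.

Lemma psi_nil n psi : is_psiP n psi -> eqv n (psi [::]) [::].
Proof.
case=> _ Hcat _ _ _; apply: cancel_mul.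
by have := Hcat [::] [::] (TVP_nil n) (TVP_nil n).
Qed.

Lemma psi_winv0 n psi L : is_psiP n psi -> TVP n L -> eqv n (psi L) [::] -> eqv n (psi (winv L)) [::].
Proof.
move=> Hp; case: (Hp) => Heq Hcat _ _ _ HL HpL.
have HiL := TVP_winv HL.
have E1 := Hcat L (winv L) HL HiL.
have E2 := Heq _ _ (TVP_cat HL HiL) (TVP_nil n) (cancel_r n L).
rewrite HpL /= in E1. by rewrite -E1 E2 psi_nil.
Qed.

Lemma psi_conj n psi a L : is_psiP n psi -> TVP n a -> TVP n L -> eqv n (psi L) [::] ->
  eqv n (psi (a ++ L ++ winv a)) [::].
Proof.
move=> Hp; case: (Hp) => Heq Hcat _ _ _ Ha HL HpL.
have Hia := TVP_winv Ha.
rewrite Hcat //; last exact: TVP_cat.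
rewrite Hcat // HpL /= -Hcat //.
rewrite (Heq _ _ (TVP_cat Ha Hia) (TVP_nil n) (cancel_r n a)).
exact: psi_nil.
Qed.

Lemma psi_gw n psi a : is_psiP n psi -> gw n a -> eqv n (psi a) a.
Proof.
move=> Hp; case: (Hp) => Heq Hcat _ _ Hg.
elim: a => [|x a IH]; first by move=> _; exact: psi_nil.
rewrite /gw /= -/(gw n a) => /andP[Hx Ha].
have Hx' : gw n [:: x] by rewrite /gw /= Hx.
rewrite -(cat1s x a) Hcat; try exact: TVP_gw.
rewrite (IH Ha).
move: Hx; rewrite /gokb; case Ex: x.1 => [j|j|j] // Hj.
have Exg := @letter_gam n x j Ex Hj.
have Hgj : gw n (g j) by rewrite /gw /g /= /gokb /= Hj.
by rewrite (Heq _ _ (TVP_gw Hx') (TVP_gw Hgj) Exg) Hg // Exg.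
Qed.

Lemma atom_kill n psi c i (e : bool) : 2 <= n -> is_psiP n psi -> tsw n c -> 1 <= i <= n - 1 ->
  TVP n (c ++ (if e then winv (lam_up i) else lam_up i) ++ winv c) /\
  eqv n (psi (c ++ (if e then winv (lam_up i) else lam_up i) ++ winv c)) [::].
Proof.
move=> Hn Hp Hc Hi; case: (Hp) => Heq _ _ Hlam _.
have [a [p [Ha Hpp Ec]]] := ts_split Hc.
set q := p ++ Pi i.
have Hq : rhow n 1 q by rewrite /q rhow_cat Hpp rhow_Pi //; lia.
have [Hu Hv Huv EM] := conjL Hn Hq.
set M := lam (phiP q 1) (phiP q 2) in EM.
have E0 : eqv n (c ++ lam_up i ++ winv c) (a ++ M ++ winv a).
  rewrite -EM lam_up_Pi // (winv_eqv Ec) Ec /q !winv_cat -!catA. by [].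
have TM : TVP n M.
  split; first by apply: wf_lam.
  move=> k; rewrite /M; exact: (@phiP_lam n).
have PM : eqv n (psi M) [::] by apply: Hlam.
have [L' [E1 TL' PL']] : exists L', [/\ eqv n (c ++ (if e then winv (lam_up i) else lam_up i) ++ winv c) (a ++ L' ++ winv a), TVP n L' & eqv n (psi L') [::]].
  case: e.
    exists (winv M); split; [|exact: (TVP_winv TM)|exact: (psi_winv0 Hp TM PM)].
    by have := winv_eqv E0; rewrite !winv_cat !winvK -!catA.
  by exists M.
have TA : TVP n (a ++ L' ++ winv a).
  by apply: TVP_cat; [exact: TVP_gw | apply: TVP_cat => //; apply/TVP_winv/TVP_gw].
have WX : wf n (c ++ (if e then winv (lam_up i) else lam_up i) ++ winv c).
  have WL : wf n (if e then winv (lam_up i) else lam_up i).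
    by case: (e); rewrite ?wf_winv wf_lam_up.
  by rewrite !wf_cat wf_winv tsw_wf //= WL.
have TX := TVP_eqv WX TA (eqv_sym E1).
split => //.
rewrite (Heq _ _ TX TA E1).
apply: psi_conj => //; exact: TVP_gw.
Qed.

Inductive Nw n : word -> Prop :=
| Nnil : Nw n [::]
| Ncons c i (e : bool) X : tsw n c -> 1 <= i <= n - 1 -> Nw n X ->
    Nw n (c ++ (if e then winv (lam_up i) else lam_up i) ++ winv c ++ X).

Lemma Nw_kill n psi X : 2 <= n -> is_psiP n psi -> Nw n X -> TVP n X /\ eqv n (psi X) [::].
Proof.
move=> Hn Hp; case: (Hp) => _ Hcat _ _ _.
elim=> {X} [|c i e X Hc Hi _ [TX PX]]; first by split; [exact: TVP_nil | exact: psi_nil].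
have [TA PA] := atom_kill e Hn Hp Hc Hi.
have E4 : forall a b c d : word, a ++ b ++ c ++ d = (a ++ b ++ c) ++ d by move=> *; rewrite -!catA.
rewrite E4.
split; first exact: TVP_cat.
by rewrite Hcat // PA PX.
Qed.

Lemma Nw_conj n d X : tsw n d -> Nw n X -> exists Y, Nw n Y /\ eqv n (d ++ X ++ winv d) Y.
Proof.
move=> Hd; elim=> {X} [|c i e X Hc Hi _ [Y [HY EY]]].
  by exists [::]; split; [constructor | rewrite cancel_r].
exists ((d ++ c) ++ (if e then winv (lam_up i) else lam_up i) ++ winv (d ++ c) ++ Y); split.
  by constructor => //; rewrite /tsw all_cat -/(tsw n d) -/(tsw n c) Hd Hc.
rewrite -EY winv_cat.
transitivity (d ++ c ++ (if e then winv (lam_up i) else lam_up i) ++ winv c ++ (winv d ++ d) ++ X ++ winv d).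
  by rewrite cancel_l -!catA.
by rewrite -!catA.
Qed.

Lemma phiPT_cons x w : phiPT (x :: w) = phiPT_letter x :: phiPT w. Proof. by []. Qed.

Lemma decomp_step n x w X : eqv n w (X ++ phiPT w) -> eqv n (x :: w) ([:: x] ++ X ++ phiPT w).
Proof. by move=> E; rewrite -(cat1s x w); apply: eqv_cat. Qed.

Lemma decomp n w : wf n w -> exists X, Nw n X /\ eqv n w (X ++ phiPT w).
Proof.
elim: w => [|x w IH]; first by exists [::]; split; [constructor|].
move=> Hxw; have /andP[Hx Hw] : gen_valid n x.1 && wf n w by exact: Hxw.
have [X [HX E]] := IH Hw.
clear Hxw; case: x Hx => [[i|i|i] b] Hx.
-
  have Hi : 1 <= i <= n - 1 by move: Hx; rewrite /gen_valid.
  have Tri : tsw n [:: (Rho i, b)] by rewrite /tsw /= /tokb /= Hi.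
  have [Y [HY EY]] := Nw_conj Tri HX.
  clear Hx; case: b Tri EY => Tri EY.
  + exists ([:: (Rho i, true)] ++ lam_up i ++ winv [:: (Rho i, true)] ++ Y); split.
      exact: (@Ncons n _ i false Y Tri Hi HY).
    apply: eqv_trans (decomp_step _ E) _; rewrite phiPT_cons -(cat1s _ (phiPT w)).
    transitivity (([:: (Rho i, true)] ++ lam_up i ++ winv [:: (Rho i, true)] ++ [:: (Rho i, true)]) ++ X ++ phiPT w).
      apply: eqv_cat => //.
      have -> : winv [:: (Rho i, true)] = [:: (Rho i, false)] by [].
      rewrite /lam_up /r -!catA.
      have -> : [:: (Rho i, true)] ++ [:: (Rho i, false)] ++ si i ++ [:: (Rho i, false)] ++ [:: (Rho i, true)]
             = [:: (Rho i, true); flip (Rho i, true)] ++ si i ++ [:: (Rho i, false); flip (Rho i, false)] by [].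
      by rewrite !eqv_free cats0.
    rewrite -EY -!catA.
    transitivity ([:: (Rho i, true)] ++ lam_up i ++ winv [:: (Rho i, true)] ++ [:: (Rho i, true)] ++ X ++ (winv [:: (Rho i, true)] ++ [:: (Rho i, true)]) ++ phiPT w).
      by rewrite cancel_l.
    by rewrite -!catA.
  + exists ([::] ++ winv (lam_up i) ++ winv [::] ++ Y); split.
      exact: (@Ncons n [::] i true Y (isT : tsw n [::]) Hi HY).
    apply: eqv_trans (decomp_step _ E) _; rewrite phiPT_cons -(cat1s _ (phiPT w)).
    transitivity ((winv (lam_up i) ++ [:: (Rho i, false)]) ++ X ++ phiPT w).
      apply: eqv_cat => //.
      rewrite /lam_up winv_cat.
      have -> : (winv (si i) ++ winv (r i)) ++ [:: (Rho i, false)]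
              = [:: (Sig i, false)] ++ [:: (Rho i, true); flip (Rho i, true)] by [].
      by rewrite eqv_free cats0.
    rewrite -EY /= -!catA.
    transitivity (winv (lam_up i) ++ [:: (Rho i, false)] ++ X ++ (winv [:: (Rho i, false)] ++ [:: (Rho i, false)]) ++ phiPT w).
      by rewrite cancel_l.
    by rewrite -!catA.
-
  have Hi : 1 <= i <= n - 1 by move: Hx; rewrite /gen_valid.
  have Tri : tsw n [:: (Rho i, b)] by rewrite /tsw /= /tokb /= Hi.
  have [Y [HY EY]] := Nw_conj Tri HX.
  exists Y; split => //.
  apply: eqv_trans (decomp_step _ E) _; rewrite phiPT_cons -(cat1s _ (phiPT w)).
  rewrite -EY -!catA.
  transitivity ([:: (Rho i, b)] ++ X ++ (winv [:: (Rho i, b)] ++ [:: (Rho i, b)]) ++ phiPT w).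
    by rewrite cancel_l.
  by rewrite -!catA.
-
  have Hi : 1 <= i <= n by move: Hx; rewrite /gen_valid.
  have Tri : tsw n [:: (Gam i, b)] by rewrite /tsw /= /tokb /= Hi.
  have [Y [HY EY]] := Nw_conj Tri HX.
  exists Y; split => //.
  apply: eqv_trans (decomp_step _ E) _; rewrite phiPT_cons -(cat1s _ (phiPT w)).
  rewrite -EY -!catA.
  transitivity ([:: (Gam i, b)] ++ X ++ (winv [:: (Gam i, b)] ++ [:: (Gam i, b)]) ++ phiPT w).
    by rewrite cancel_l.
  by rewrite -!catA.
Qed.

Typeclasses Transparent letter word.

Lemma phiP_phiPT w k : phiP (phiPT w) k = phiP w k.
Proof. elim: w => //= x w IH; rewrite IH; by case: x => [[i|i|i] b]. Qed.

Lemma wf_phiPT n w : wf n w -> wf n (phiPT w).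
Proof. by elim: w => //= x w IH /andP[Hx Hw]; rewrite IH // andbT; case: x Hx => [[i|i|i] b]. Qed.

Lemma tsw_phiPT n w : wf n w -> tsw n (phiPT w).
Proof. by elim: w => //= x w IH /andP[Hx Hw]; rewrite /tsw /= -/(tsw n _) IH // andbT; case: x Hx => [[i|i|i] b]. Qed.

Lemma PT_PL n psi x : 2 <= n -> is_psiP n psi -> PT n x -> PL n psi x.
Proof.
move=> Hn Hp [Wx Ex]; case: (Hp) => Heq _ _ _ _.
have [X [HX E]] := decomp Wx.
have [TX PX] := Nw_kill Hn Hp HX.
have Tx : TVP n x.
  split => // k; rewrite -phiP_phiPT (phiP_eqv Ex) //.
have E' : eqv n x X by rewrite E Ex cats0.
split => //.
by rewrite (Heq _ _ Tx TX E').
Qed.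

Lemma PL_PT n psi z : 2 <= n -> is_psiP n psi -> PL n psi z -> PT n z.
Proof.
move=> Hn Hp [[Wz Pz] Ez]; case: (Hp) => Heq Hcat _ _ _.
have [X [HX E]] := decomp Wz.
have [TX PX] := Nw_kill Hn Hp HX.
set t := phiPT z in E.
have Tt : TVP n t by split; [exact: wf_phiPT | move=> k; rewrite /t phiP_phiPT].
have Et : eqv n (psi t) [::].
  have TXt := TVP_cat TX Tt.
  have H1 : eqv n (psi (X ++ t)) (psi t) by rewrite Hcat // PX.
  by rewrite -H1 (Heq _ _ (TVP_cat TX Tt) (conj Wz Pz) (eqv_sym E)) Ez.
have [a [p [Ha Hpp Etp]]] := ts_split (tsw_phiPT Wz).
have Pp : forall k, phiP p k = k.
  move=> k; have := Pz k. rewrite -(phiP_phiPT z).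
  have := phiP_eqv Etp k. rewrite phiP_cat (phiP_gw _ Ha) => ->. by [].
have Ep : eqv n p [::] := coxeter (isT : 1 <= 1) Hpp Pp.
have Eta : eqv n t a by rewrite /t Etp Ep cats0.
split => //.
rewrite -/t Eta -(psi_gw Hp Ha).
rewrite -(Heq _ _ Tt (TVP_gw Ha) Eta).
exact: Et.
Qed.

Theorem mainTheorem16 (n : nat) (psi : word -> word) :
  2 <= n -> is_psiP n psi -> subgroup_iso n (PT n) (PL n psi).
Proof.
move=> Hn Hp.
exists id; split => //.
- by move=> x; apply: PT_PL.
- by move=> z Hz; exists z => //; apply: PL_PT Hz.
Qed.
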